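(* Let $n\geq 1$ and $0\leq p\leq 1$. Let $\Pr_p(C)$ denote the probability, under the bias-$p$ measure, that a Boolean function on $n$ variables is canalizing. Then $$\Pr_p(C) = (-1)^n\bigl(p^{2^n}+(1-p)^{2^n}\bigr) - 2n\,p^{2^{n-1}}(1-p)^{2^{n-1}} + \sum_{k=1}^n (-1)^{k+1}\binom{n}{k}2^k\bigl(p^{2^n-2^{n-k}}+(1-p)^{2^n-2^{n-k}}\bigr).$$
   Context: A Boolean function on $n$ variables is a function $f:\{0,1\}^n\to\{0,1\}$; write $[n]=\{0,1,\dots,n-1\}$ for the index set of the variables. For $0\leq p\leq 1$, the bias-$p$ probability measure on the (finite) set of all Boolean functions on $n$ variables is $\Pr_p(f)=p^{|f^{-1}\{1\}|}(1-p)^{|f^{-1}\{0\}|}$ (with $0^0=1$). A Boolean function $f$ is canalizing if there exist $i\in[n]$ and $s,v\in\{0,1\}$ such that for all $x\in\{0,1\}^n$, $x_i=s$ implies $f(x)=v$. $C$ denotes the set of canalizing Boolean functions on $n$ variables. *)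

(* Defs.v *)
From mathcomp Require Import all_boot all_order all_algebra.
Set Implicit Arguments. Unset Strict Implicit. Unset Printing Implicit Defensive.
Import Order.TTheory GRing.Theory Num.Theory.
Local Open Scope ring_scope.

Definition input (n : nat) := {ffun 'I_n -> bool}.
Definition boolfun (n : nat) := {ffun input n -> bool}.

Definition canalizing (n : nat) (f : boolfun n) : bool :=
  [exists i : 'I_n, exists s : bool, exists v : bool,
     [forall x : input n, (x i == s) ==> (f x == v)]].

(* Bias-p probability of a single Boolean function (0^0 = 1 via ^+). *)
Definition prp (R : nzRingType) (n : nat) (p : R) (f : boolfun n) : R :=
  p ^+ #|[set x | f x]| * (1 - p) ^+ #|[set x | ~~ f x]|.

Definition Pr_canal (R : nzRingType) (n : nat) (p : R) : R :=
  \sum_(f : boolfun n | canalizing f) prp p f.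

(* Main.v *)
Require Import Defs.
From mathcomp Require Import all_boot all_order all_algebra.
From mathcomp Require Import ring lra.
Import Order.TTheory GRing.Theory Num.Theory.
Local Open Scope ring_scope.

Lemma sum_opt (R : nmodType) (F : option bool -> R) :
  \sum_(o : option bool) F o = F None + F (Some true) + F (Some false).
Proof. rewrite /index_enum !unlock /= !unlock /=. by rewrite addr0 addrA. Qed.

Lemma sumn_opt (F : option bool -> nat) :
  (\sum_(o : option bool) F o = F None + F (Some true) + F (Some false))%N.
Proof. rewrite /index_enum !unlock /= !unlock /=. by rewrite addn0 addnA. Qed.

Lemma prod_ind {R : comNzRingType} (I : finType) (P : pred I) :
  \prod_(i : I) ((P i)%:R : R) = ([forall i, P i])%:R.
Proof.
case: forallP => H.
  by rewrite big1 // => i _; rewrite H.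
have [i Hi] : exists i, ~~ P i.
  by apply/existsP; rewrite -negb_forall; apply/negP => /forallP.
by rewrite (bigD1 i) //= (negbTE Hi) mul0r.
Qed.

Lemma card_sum (T : finType) (P : pred T) : #|P| = (\sum_(x : T) (P x : nat))%N.
Proof. rewrite -sum1_card big_mkcond /=; apply: eq_bigr => x _; rewrite unfold_in; by case: (P x). Qed.

Definition w {R : comNzRingType} (p : R) (b : bool) : R := if b then p else 1 - p.

Lemma prpE {R : comNzRingType} n (p : R) (f : boolfun n) :
  prp p f = \prod_(x : input n) w p (f x).
Proof.
rewrite /prp (bigID (fun x => f x)) /=.
rewrite (eq_bigr (fun _ => p)); last by move=> x ->.
rewrite [X in _ = _ * X](eq_bigr (fun _ => 1 - p)); last by move=> x /negbTE ->.
by rewrite !prodr_const !cardsE.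
Qed.

Lemma sum_constr {R : comNzRingType} n (p : R) (a : input n -> bool -> bool) :
  \sum_(f : boolfun n) prp p f * ([forall x, a x (f x)])%:R =
  \prod_(x : input n) ((a x true)%:R * p + (a x false)%:R * (1 - p)).
Proof.
rewrite (eq_bigr (fun x => \sum_(b : bool) (a x b)%:R * w p b)); last first.
  by move=> x _; rewrite big_bool.
rewrite bigA_distr_bigA /=; apply: eq_bigr => f _.
by rewrite prpE -prod_ind -big_split /=; apply: eq_bigr => x _; rewrite mulrC.
Qed.

Lemma sum_region {R : comNzRingType} n (p : R) (U : pred (input n)) (v : bool) :
  \sum_(f : boolfun n) prp p f * ([forall x, U x ==> (f x == v)])%:R = w p v ^+ #|U|.
Proof.
rewrite (@sum_constr _ n p (fun x b => U x ==> (b == v))) -prodr_const [RHS]big_mkcond /=.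
apply: eq_bigr => x _; rewrite unfold_in.
by case: (U x); case: v => /=; rewrite /w /=; ring.
Qed.

Lemma sum_prp {R : comNzRingType} n (p : R) :
  \sum_(f : boolfun n) prp p f = 1.
Proof.
rewrite -(expr0 (w p true)) -(card0 (input n)) -(@sum_region _ n p pred0 true).
apply: eq_bigr => f _.
have -> : [forall x, pred0 x ==> (f x == true)] = true by apply/forallP.
by rewrite mulr1.
Qed.

Lemma prodn_ind (I : finType) (P : pred I) :
  (\prod_(i : I) (P i : nat) = [forall i, P i])%N.
Proof.
case: forallP => H.
  by rewrite big1 // => i _; rewrite H.
have [i Hi] : exists i, ~~ P i.
  by apply/existsP; rewrite -negb_forall; apply/negP => /forallP.
by rewrite (bigD1 i) //= (negbTE Hi) mul0n.
Qed.

Definition supp {n} (r : {ffun 'I_n -> option bool}) : {set 'I_n} := [set i | r i != None].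

Lemma card_supp_eq {n} (S : {set 'I_n}) :
  #|[pred r : {ffun 'I_n -> option bool} | supp r == S]| = (2 ^ #|S|)%N.
Proof.
rewrite [LHS]card_sum.
rewrite (eq_bigr (fun r : {ffun 'I_n -> option bool} => \prod_(i : 'I_n) ((r i != None) == (i \in S) : nat))%N); last first.
  move=> r _; rewrite prodn_ind /=; congr nat_of_bool.
  apply/eqP/forallP => [<- i|H]; first by rewrite inE.
  by apply/setP => i; rewrite inE; exact: (eqP (H i)).
rewrite -(@bigA_distr_bigA nat 0 1 muln addn _ _ (fun i (o : option bool) => nat_of_bool ((o != None) == (i \in S)))) /=.
rewrite -prod_nat_const [RHS]big_mkcond /=; apply: eq_bigr => i _.
by rewrite sumn_opt /=; case: (i \in S).
Qed.

Lemma group_supp {R : comNzRingType} n (F : nat -> R) :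
  \sum_(r : {ffun 'I_n -> option bool}) F #|supp r| =
  \sum_(k < n.+1) F k *+ ('C(n, k) * 2 ^ k).
Proof.
rewrite (partition_big (@supp n) predT) //=.
rewrite (eq_bigr (fun S : {set 'I_n} => F #|S| *+ 2 ^ #|S|)); last first.
  move=> S _.
  rewrite (eq_bigr (fun _ => F #|S|)); last by move=> r /eqP ->.
  by rewrite sumr_const card_supp_eq.
rewrite (partition_big (fun S : {set 'I_n} => (inord #|S| : 'I_n.+1)) predT) //=.
apply: eq_bigr => k _.
have Hk : forall S : {set 'I_n}, (inord #|S| == k :> 'I_n.+1) = (#|S| == k).
  move=> S; have Hs : (#|S| < n.+1)%N by rewrite ltnS (leq_trans (max_card _)) // card_ord.
  apply/eqP/eqP => [<-|H]; first by rewrite inordK.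
  by apply: val_inj; rewrite /= inordK.
rewrite (eq_bigr (fun _ => F k *+ 2 ^ k)); last first.
  by move=> S; rewrite Hk => /eqP ->.
rewrite sumr_const -mulrnA mulnC; congr (_ *+ (_ * _)).
transitivity #|[set S : {set 'I_n} | #|S| == k]|; last by rewrite card_draws card_ord.
apply: eq_card => S.
by rewrite !inE unfold_in -(Hk S).
Qed.

Definition hv {n} (f : boolfun n) (v : bool) (i : 'I_n) (s : bool) : bool :=
  [forall x : input n, (x i == s) ==> (f x == v)].
Arguments hv : simpl never.

Definition Urho {n} (r : {ffun 'I_n -> option bool}) (x : input n) : bool :=
  [exists i, r i == Some (x i)].

Lemma L7a {R : comNzRingType} n (f : boolfun n) (v : bool) :
  \prod_(i < n) (1 - ((hv f v i false)%:R : R) - (hv f v i true)%:R) =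
  \sum_(r : {ffun 'I_n -> option bool})
     (-1) ^+ #|supp r| * ([forall x, Urho r x ==> (f x == v)])%:R.
Proof.
pose G (i : 'I_n) (o : option bool) : R :=
  match o with None => 1 | Some s => - (hv f v i s)%:R end.
rewrite (eq_bigr (fun i => \sum_(o : option bool) G i o)); last first.
  by move=> i _; rewrite sum_opt /G; ring.
rewrite (bigA_distr_bigA G) /=; apply: eq_bigr => r _.
pose Q i := if r i is Some s then hv f v i s else true.
rewrite (eq_bigr (fun i => (if r i is Some _ then -1 else 1) * (Q i)%:R)); last first.
  by move=> i _; rewrite /G /Q; case: (r i) => [s|]; rewrite ?mulN1r ?mulr1.
rewrite big_split /= (@prod_ind R _ Q); congr (_ * _%:R).
  rewrite (bigID (fun i => r i != None)) /=.
  rewrite (eq_bigr (fun _ => -1)); last by move=> i; case: (r i).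
  rewrite [X in _ * X]big1 ?mulr1; last by move=> i; case: (r i).
  by rewrite prodr_const /supp cardsE.
congr (nat_of_bool _); apply/idP/idP => /forallP H; apply/forallP.
  move=> x; apply/implyP => /existsP [i /eqP Hi].
  by move: (H i); rewrite /Q Hi => /forallP /(_ x); rewrite eqxx.
move=> i; rewrite /Q; case Hi: (r i) => [s|] //.
apply/forallP => x; apply/implyP => /eqP Hx.
by apply: (implyP (H x)); apply/existsP; exists i; rewrite Hi Hx.
Qed.

Lemma card_Urho n (r : {ffun 'I_n -> option bool}) :
  #|Urho r| = (2 ^ n - 2 ^ (n - #|supp r|))%N.
Proof.
have HC : #|[predC Urho r]| = (2 ^ (n - #|supp r|))%N.
  rewrite [LHS]card_sum.
  rewrite (eq_bigr (fun x : input n => \prod_(i < n) nat_of_bool (r i != Some (x i)))%N); last first.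
    by move=> x _; rewrite prodn_ind /= /Urho negb_exists.
  rewrite -(@bigA_distr_bigA nat 0 1 muln addn _ _ (fun i (b : bool) => nat_of_bool (r i != Some b))) /=.
  have -> : (n - #|supp r| = #|[pred i | r i == None]|)%N.
    have := cardC (supp r); rewrite card_ord => {1}<-.
    rewrite addKn; apply: eq_card => i.
    by rewrite !inE negbK.
  rewrite -prod_nat_const [RHS]big_mkcond /=; apply: eq_bigr => i _.
  by rewrite big_bool inE /=; case: (r i) => [[]|].
have := cardC (Urho r); rewrite card_ffun card_bool card_ord => <-.
by rewrite HC addnK.
Qed.

Lemma L7b {R : comNzRingType} n (p : R) (v : bool) :
  \sum_(f : boolfun n) prp p f *
     \prod_(i < n) (1 - ((hv f v i false)%:R : R) - (hv f v i true)%:R)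
  = \sum_(k < n.+1) ((-1) ^+ k * w p v ^+ (2 ^ n - 2 ^ (n - k))) *+ ('C(n, k) * 2 ^ k).
Proof.
rewrite -(@group_supp _ n (fun k => (-1) ^+ k * w p v ^+ (2 ^ n - 2 ^ (n - k)))).
under eq_bigr do rewrite L7a mulr_sumr.
rewrite exchange_big /=; apply: eq_bigr => r _.
rewrite -card_Urho -(@sum_region _ n p (Urho r) v) mulr_sumr; apply: eq_bigr => f _.
by rewrite mulrCA.
Qed.

Lemma card_half {n} (i : 'I_n) (s : bool) :
  #|[pred x : input n | x i == s]| = (2 ^ n.-1)%N.
Proof.
rewrite [LHS]card_sum.
rewrite (eq_bigr (fun x : input n => \prod_(j < n) nat_of_bool ((j != i) || (x j == s)))%N); last first.
  move=> x _; rewrite prodn_ind /=; congr nat_of_bool; apply/idP/forallP.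
    by move=> /eqP Hx j; case: eqP => //= ->; rewrite Hx.
  by move=> /(_ i); rewrite eqxx.
rewrite -(@bigA_distr_bigA nat 0 1 muln addn _ _ (fun j (b : bool) => nat_of_bool ((j != i) || (b == s)))) /=.
have := cardC1 i; rewrite card_ord => <-.
rewrite -prod_nat_const [RHS]big_mkcond /=; apply: eq_bigr => j _.
by rewrite big_bool !inE; case: (j == i); case: s.
Qed.

Definition cst {n} (f : boolfun n) (v : bool) := [forall x : input n, f x == v].

Lemma L9 {R : comNzRingType} n (p : R) (v : bool) :
  \sum_(f : boolfun n) prp p f * (cst f v)%:R = w p v ^+ (2 ^ n).
Proof.
have -> : (2 ^ n)%N = #|(predT : pred (input n))|.
  by rewrite cardT -cardE card_ffun card_bool card_ord.
rewrite -sum_region; apply: eq_bigr => f _.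
by congr (_ * (nat_of_bool _)%:R); apply: eq_forallb => x.
Qed.

Definition aL8 {n} (i : 'I_n) (s : bool) (x : input n) (b : bool) :=
  if x i == s then ~~ b else b.

Lemma L8 {R : comNzRingType} n (p : R) (i : 'I_n) (s : bool) :
  \sum_(f : boolfun n) prp p f * (hv f false i s && hv f true i (~~ s))%:R =
  p ^+ (2 ^ n.-1) * (1 - p) ^+ (2 ^ n.-1).
Proof.
have HH : forall f : boolfun n, (hv f false i s && hv f true i (~~ s)) =
    [forall x : input n, aL8 i s x (f x)].
  move=> f; rewrite /hv /aL8; apply/andP/forallP => [[/forallP H0 /forallP H1] x|H].
    case Hx: (x i == s).
      by move: (H0 x); rewrite Hx /= => /eqP ->.
    have Hx' : x i == ~~ s by destruct (x i), s; simpl in *; try congruence.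
    by move: (H1 x); rewrite Hx' /= => /eqP ->.
  split; apply/forallP => x; apply/implyP => /eqP Hx; move: (H x); rewrite /= Hx.
    by rewrite eqxx; case: (f x).
  by destruct s, (f x); simpl in *; try congruence.
under eq_bigr do rewrite HH.
rewrite sum_constr (bigID (fun x : input n => x i == s)) /= mulrC /aL8.
rewrite [X in X * _](eq_bigr (fun _ => p)); last by move=> x /negbTE Hx; rewrite Hx /=; ring.
rewrite [X in _ * X](eq_bigr (fun _ => 1 - p)); last by move=> x Hx; rewrite Hx /=; ring.
rewrite !prodr_const; congr (_ ^+ _ * _ ^+ _).
  rewrite -(card_half i (~~ s)); apply: eq_card => x; rewrite !inE.
  by rewrite /in_mem /=; case: (x i); destruct s.
rewrite -(card_half i s); apply: eq_card => x; rewrite /in_mem /=.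
by case: (x i); destruct s.
Qed.

Lemma K {n} {f : boolfun n} {i s j t} :
  hv f false i s -> hv f true j t -> j = i /\ t = ~~ s.
Proof.
move=> /forallP H0 /forallP H1.
case: (boolP ((j == i) && (t == ~~ s))) => [/andP [/eqP -> /eqP ->] // | Hn].
exfalso.
pose x : input n := [ffun k => if k == j then t else s].
have xi : x i == s.
  rewrite /x ffunE; have [Eij|//] := eqVneq i j.
  subst j; move: Hn; rewrite !eqxx /=.
  by destruct t, s.
have xj : x j == t by rewrite /x ffunE eqxx.
by move: (implyP (H0 x) xi) (implyP (H1 x) xj) => /eqP -> .
Qed.

Definition B {n} (f : boolfun n) (v : bool) := [exists i, exists s, hv f v i s].
Arguments B : simpl never.

Lemma LD {R : comNzRingType} n (f : boolfun n) :
  \sum_(i < n) \sum_(s : bool) ((hv f false i s && hv f true i (~~ s))%:R : R) =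
  (B f false && B f true)%:R.
Proof.
case: (boolP (B f false && B f true)) => [/andP [/existsP [i0 /existsP [s0 H0]]
    /existsP [j /existsP [t H1]]] | Hn].
  have [Ej Et] := K H0 H1; subst j t.
  rewrite pair_bigA (bigD1 (i0, s0)); last by [].
  rewrite /= H0 H1.
  rewrite big1 ?addr0; first by [].
  move=> [i s] Hne.
  case Hx: (hv f false i s && hv f true i (~~ s)); last by [].
  move/andP: Hx => [Ha _]; have [Ei Es] := K Ha H1.
  exfalso; move: Hne; rewrite Ei.
  have Es2 : s = s0 by destruct s, s0.
  by rewrite Es2 eqxx.
rewrite big1 // => i _; rewrite big1 // => s _.
case Hx: (hv f false i s && hv f true i (~~ s)); last by [].
move/andP: Hx => [Ha Hb]; exfalso; move/negP: Hn; apply; apply/andP; split.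
  by apply/existsP; exists i; apply/existsP; exists s.
by apply/existsP; exists i; apply/existsP; exists (~~ s).
Qed.

Lemma canal_B n (f : boolfun n) : canalizing f = B f false || B f true.
Proof.
rewrite /canalizing /B; apply/idP/idP.
  move=> /existsP [i /existsP [s /existsP [v H]]]; apply/orP.
  case: v H => H; [right | left]; apply/existsP; exists i; apply/existsP; exists s; exact: H.
move=> /orP [] /existsP [i /existsP [s H]]; apply/existsP; exists i; apply/existsP; exists s;
  apply/existsP; [exists false | exists true]; exact: H.
Qed.

Lemma sum_bool_v {R : nmodType} (v0 : bool) (F : bool -> R) :
  \sum_(v : bool) F v = F v0 + F (~~ v0).
Proof. by rewrite big_bool; case: v0 => //; rewrite addrC. Qed.

Lemma L6 {R : comNzRingType} n (f : boolfun n) : (0 < n)%N ->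
  ((canalizing f)%:R : R) =
  (-1) ^+ n * \sum_(v : bool) (cst f v)%:R
  - \sum_(i < n) \sum_(s : bool) (hv f false i s && hv f true i (~~ s))%:R
  + \sum_(v : bool) (1 - \prod_(i < n) (1 - (hv f v i false)%:R - (hv f v i true)%:R)).
Proof.
move=> n0; pose i0 : 'I_n := Ordinal n0.
rewrite canal_B LD.
case: (boolP [exists v, cst f v]) => [/existsP [v0 Hc] | Hnc].
  have Hall : forall i s, hv f v0 i s.
    by move=> i s; apply/forallP => x; apply/implyP => _; move/forallP: Hc.
  have Hnone : forall i s, hv f (~~ v0) i s = false.
    move=> i s; apply/negP => /forallP /(_ [ffun _ => s]); rewrite ffunE eqxx /=.
    by move/forallP: Hc => /(_ [ffun _ => s]) /eqP ->; destruct v0.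
  have Bv0 : B f v0 by rewrite /B; apply/existsP; exists i0; apply/existsP; exists false.
  have Bn : B f (~~ v0) = false.
    apply/negbTE; rewrite /B negb_exists; apply/forallP => i; rewrite negb_exists; apply/forallP => s; by rewrite Hnone.
  have Cn : cst f (~~ v0) = false.
    apply/negP => /forallP /(_ [ffun _ => false]) /eqP.
    by move/forallP: Hc => /(_ [ffun _ => false]) /eqP ->; destruct v0.
  have HBor : (B f false || B f true) = true by move: Bv0; destruct v0 => ->; rewrite ?orbT.
  have HBand : (B f false && B f true) = false by move: Bn; destruct v0 => /= ->; rewrite ?andbF.
  rewrite !(sum_bool_v v0) Hc Cn HBor HBand.
  rewrite (eq_bigr (fun _ => -1)); last by move=> i _; rewrite !Hall /=; ring.
  rewrite [X in _ + (1 - X)]big1; last by move=> i _; rewrite !Hnone /=; ring.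
  rewrite prodr_const card_ord /=; ring.
have Hnb : forall v i, ~~ (hv f v i false && hv f v i true).
  move=> v i; apply/negP => /andP [H1 H2]; move/negP: Hnc; apply; apply/existsP; exists v.
  apply/forallP => x; case Hx: (x i).
    by move/forallP: H2 => /(_ x); rewrite Hx.
  by move/forallP: H1 => /(_ x); rewrite Hx.
have Cv : forall v, cst f v = false.
  by move=> v; apply/negP => Hc; move/negP: Hnc; apply; apply/existsP; exists v.
have HP : forall v, \prod_(i < n) (1 - ((hv f v i false)%:R : R) - (hv f v i true)%:R) =
    (~~ B f v)%:R.
  move=> v; rewrite (eq_bigr (fun i => (~~ (hv f v i false || hv f v i true))%:R)); last first.
    move=> i _; move: (Hnb v i).
    by case: (hv f v i false); case: (hv f v i true) => //= _; ring.
  rewrite prod_ind; congr (nat_of_bool _)%:R.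
  rewrite /B negb_exists; apply: eq_forallb => i.
  rewrite negb_exists; apply/idP/idP.
    by rewrite negb_or => /andP [Ha Hb]; apply/forallP => -[].
  by move/forallP => H; rewrite negb_or (H false) (H true).
rewrite !big_bool !Cv !HP.
by case: (B f false); case: (B f true) => /=; ring.
Qed.

Theorem mainTheorem1 (R : realFieldType) (n : nat) (p : R) :
  (1 <= n)%N -> 0 <= p -> p <= 1 ->
  Pr_canal n p =
    (-1) ^+ n * (p ^+ (2 ^ n) + (1 - p) ^+ (2 ^ n))
    - (2 * n)%:R * p ^+ (2 ^ n.-1) * (1 - p) ^+ (2 ^ n.-1)
    + \sum_(1 <= k < n.+1)
        (-1) ^+ k.+1 * ('C(n, k) * 2 ^ k)%:R
          * (p ^+ (2 ^ n - 2 ^ (n - k)) + (1 - p) ^+ (2 ^ n - 2 ^ (n - k))).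
Proof.
move=> n0 _ _.
have E0 : Pr_canal n p = \sum_(f : boolfun n) prp p f * (canalizing f)%:R.
  rewrite /Pr_canal big_mkcond /=; apply: eq_bigr => f _.
  by case: (canalizing f); rewrite ?mulr1 ?mulr0.
rewrite E0.
under eq_bigr => f _ do rewrite (@L6 R n f n0) !mulrDr mulrN.
rewrite !big_split /= sumrN.
have T1 : \sum_(f : boolfun n) prp p f * ((-1) ^+ n * \sum_(v : bool) ((cst f v)%:R : R)) =
    (-1) ^+ n * (p ^+ (2 ^ n) + (1 - p) ^+ (2 ^ n)).
  under eq_bigr do rewrite mulrCA mulr_sumr.
  rewrite -mulr_sumr exchange_big /= big_bool !L9 /w //.
have T2 : \sum_(f : boolfun n) prp p f *
    \sum_(i < n) \sum_(s : bool) (((hv f false i s && hv f true i (~~ s))%:R) : R) =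
    (2 * n)%:R * p ^+ (2 ^ n.-1) * (1 - p) ^+ (2 ^ n.-1).
  under eq_bigr do rewrite mulr_sumr; under eq_bigr do under eq_bigr do rewrite mulr_sumr.
  rewrite exchange_big /=.
  under eq_bigr do rewrite exchange_big /= big_bool !L8.
  by rewrite sumr_const card_ord -[LHS]mulr_natl natrM /=; ring.
have T3 : forall v : bool, \sum_(f : boolfun n) prp p f *
    (1 - \prod_(i < n) (1 - (hv f v i false)%:R - (hv f v i true)%:R)) =
    - \sum_(k < n) ((-1) ^+ k.+1 * w p v ^+ (2 ^ n - 2 ^ (n - k.+1))) *+ ('C(n, k.+1) * 2 ^ k.+1).
  move=> v; under eq_bigr do rewrite mulrBr mulr1.
  rewrite sumrB sum_prp L7b big_ord_recl /= subn0 subnn !expr0 mul1r bin0 muln1 mulr1n.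
  rewrite opprD addrA subrr add0r; congr (- _); apply: eq_bigr => i _.
rewrite T1 T2.
under eq_bigr do rewrite mulr_sumr.
rewrite exchange_big /= big_bool !T3 big_add1 /= big_mkord.
congr (_ + _).
rewrite -!sumrN -big_split /=; apply: eq_bigr => k _.
rewrite (exprS _ k.+1).
move: (p ^+ _) ((1 - p) ^+ _) ((-1) ^+ k.+1) ('C(n, k.+1) * 2 ^ k.+1)%N => a b x c.
rewrite -mulrnAr -mulrnAr -mulr_natr; ring.
Qed.
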